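(* Let $q=2^m$ and let $e$ be an integer with $1\le e<m$. Then every $e$-Klenian polynomial $f\in\mathbb F_q[X,Y]$ has a companion.
   Context: $q$ is a prime power and $\mathbb F_q=\{c_0,\dots,c_{q-1}\}$ is a fixed enumeration; $\mathfrak S_q$ is the symmetric group of permutations of $\mathbb F_q$, composed right to left, written in cycle notation. Every function $\mathbb F_q^2\to\mathbb F_q$ is identified with the unique polynomial in $\mathbb F_q[X,Y]$ of degree $<q$ in each variable representing it. $f\in\mathbb F_q[X,Y]$ is a local permutation polynomial (LPP) if $x\mapsto f(x,y_0)$ and $y\mapsto f(x_0,y)$ are permutations of $\mathbb F_q$ for all $x_0,y_0$. A permutation polynomial tuple is $(\beta_0,\dots,\beta_{q-1})\in\mathfrak S_q^q$ such that $\beta_i^{-1}\beta_j$ has no fixed point whenever $i\ne j$; LPPs $f$ correspond bijectively to such tuples via $f(x,\beta_i(x))=c_i$ for all $x$ and all $i$. Two LPPs $f,g$ are orthogonal (companions) if for every $(a,b)\in\mathbb F_q^2$ the system $f(X,Y)=a$, $g(X,Y)=b$ has exactly one solution in $\mathbb F_q^2$; a companion of $f$ is an LPP orthogonal to $f$. $e$-Klenian polynomials: for $q=p^r$, $0\le e<r$, $\ell=p^e$, $t=q/\ell$, let $\alpha=\prod_{i=0}^{t-1}(c_{i\ell},c_{i\ell+1},\dots,c_{(i+1)\ell-1})$, $\beta=\prod_{j=0}^{\ell-1}(c_j,c_{j+\ell},\dots,c_{j+(t-1)\ell})$ and $G=\{\alpha^i\beta^j:0\le i\le \ell-1,0\le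 j\le t-1\}$ (a subgroup of $\mathfrak S_q$ of order $q$ whose non-identity elements have no fixed points); an $e$-Klenian polynomial is an LPP whose permutation polynomial tuple consists of the $q$ elements of $G$ in some order. *)

(* Defs.v *)
From mathcomp Require Import all_boot all_order all_algebra all_field.
Set Implicit Arguments. Unset Strict Implicit. Unset Printing Implicit Defensive.

(* Functions F^2 -> F are identified with reduced polynomials in F[X,Y];
   we work with the functions directly. *)

Definition is_LPP (F : finType) (f : F -> F -> F) : Prop :=
  (forall y : F, bijective (fun x => f x y)) /\ (forall x : F, bijective (f x)).

Definition orthogonal_LPP (F : finType) (f g : F -> F -> F) : Prop :=
  forall a b : F, exists! p : F * F, f p.1 p.2 = a /\ g p.1 p.2 = b.

(* A fixed enumeration c_0, ..., c_{q-1} of F, given as a duplicate-free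
   sequence containing every element; c_k = nth _ cs k. *)
Definition is_enum (F : finType) (cs : seq F) : Prop :=
  uniq cs /\ forall x : F, x \in cs.

(* On indices: alpha = prod_i (iL, iL+1, ..., (i+1)L-1) maps
   k = iL + r to iL + ((r+1) mod L). *)
Definition alpha_idx (L k : nat) : nat := (k %/ L) * L + (k %% L).+1 %% L.
(* beta = prod_j (j, j+L, ..., j+(t-1)L) with q = tL maps k to (k+L) mod q. *)
Definition beta_idx (L q k : nat) : nat := (k + L) %% q.

Definition alphaF (F : finType) (cs : seq F) (L : nat) (x : F) : F :=
  nth x cs (alpha_idx L (index x cs)).
Definition betaF (F : finType) (cs : seq F) (L : nat) (x : F) : F :=
  nth x cs (beta_idx L (size cs) (index x cs)).

Definition Gelt (F : finType) (cs : seq F) (L i j : nat) (x : F) : F :=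
  iter i (alphaF cs L) (iter j (betaF cs L) x).

(* f is e-Klenian (q = p^r, L = p^e, t = q/L) w.r.t. the enumeration cs:
   f is an LPP whose permutation polynomial tuple (b_0,...,b_{q-1}),
   defined by f(x, b_i(x)) = c_i, consists of the q elements of
   G = {alpha^i beta^j : i < L, j < t} in some order. *)
Definition klenian (F : finType) (p e : nat) (cs : seq F) (f : F -> F -> F)
  : Prop :=
  is_LPP f /\
  exists b : 'I_#|F| -> F -> F,
    (forall (k : 'I_#|F|) (x : F), f x (b k x) = nth x cs k) /\
    (forall k : 'I_#|F|, exists i j, [/\ i < p ^ e, j < #|F| %/ p ^ e &
                                forall x, b k x = Gelt cs (p ^ e) i j x]) /\
    (forall k1 k2 : 'I_#|F|, (forall x, b k1 x = b k2 x) -> k1 = k2) /\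
    (forall i j, i < p ^ e -> j < #|F| %/ p ^ e ->
       exists k : 'I_#|F|, forall x, b k x = Gelt cs (p ^ e) i j x).

(* Main.v *)
Require Import Defs.
From mathcomp Require Import all_boot all_order all_algebra all_field.
From mathcomp Require Import zify.
Set Implicit Arguments. Unset Strict Implicit.

Definition boxp u v (x : nat * nat) := (x.1 < u) && (x.2 < v).
Definition addp u v (x y : nat*nat) := ((x.1 + y.1) %% u, (x.2 + y.2) %% v).
Definition ortho u v (th : nat*nat -> nat*nat) :=
 [/\ forall x, boxp u v x -> boxp u v (th x),
     forall x y, boxp u v x -> boxp u v y -> th x = th y -> x = y &
     forall x y, boxp u v x -> boxp u v y ->
        addp u v x (th x) = addp u v y (th y) -> x = y].

Ltac peq := let E := fresh in move=> E;
  have := congr1 fst E; have := congr1 snd E; clear E; rewrite /= => e2 e1;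
  f_equal.

Lemma mod_small2 x M : 0 < M -> x < M + M -> x %% M = if x < M then x else x - M.
Proof.
move=> M0 xM; case: ifP => h; first by rewrite modn_small.
have -> : x = (x - M) + M by lia.
rewrite modnDr modn_small; lia.
Qed.

Definition thB c (x : nat*nat) : nat*nat :=
 if x.1 == 0 then (if x.2 < c then (0, x.2) else (1, x.2 - c))
 else if x.2 + 2 <= c then (0, x.2 + c + 1)
 else if x.2 + 1 < c + c then (1, x.2 + 1) else (0, c).

Lemma ortho_base c : 0 < c -> ortho 2 (c + c) (thB c).
Proof.
move=> c0; split.
- case=> a r; rewrite /boxp /thB /= => /andP[ha hr].
  repeat case: ifP => ? /=; try (apply/andP; split); lia.
- case=> a r [a' r']; rewrite /boxp /thB /= => /andP[ha hr] /andP[ha' hr'].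
  repeat case: ifP => ? /=; peq; lia.
- case=> a r [a' r']; rewrite /boxp /addp /thB /= => /andP[ha hr] /andP[ha' hr'].
  have c2 : 0 < c + c by lia.
  repeat case: ifP => ? /=; peq;
   move: e1 e2; rewrite ?(@mod_small2 _ (c+c)) //; try lia;
   repeat case: ifP => ? ; lia.
Qed.

Definition thQ (x: nat*nat) := (x.2, (x.1 + x.2) %% 2).
Definition thD (th : nat*nat -> nat*nat) (x : nat*nat) :=
  let q := (x.1 %% 2, x.2 %% 2) in let n := (x.1 %/ 2, x.2 %/ 2) in
  ((thQ q).1 + 2 * (th n).1, (thQ q).2 + 2 * (th n).2).

Lemma M2 X X' u : X %% (2*u) = X' %% (2*u) -> X %% 2 = X' %% 2 /\ X %/ 2 %% u = X' %/ 2 %% u.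
Proof.
move=> E; split.
  have d2 : 2 %| 2 * u by rewrite dvdn_mulr.
  by rewrite -(modn_dvdm X d2) E (modn_dvdm X' d2).
by rewrite !modn_divl mulnC -E.
Qed.

Lemma ortho_double u v th : 0 < u -> 0 < v -> ortho u v th -> ortho (2*u) (2*v) (thD th).
Proof.
move=> u0 v0 [hb hi hs]; split.
- case=> a r; rewrite /boxp /thD /thQ /= => /andP[ha hr].
  have /andP[] : boxp u v (th (a %/ 2, r %/2)) by apply: hb; rewrite /boxp /=; apply/andP; split; lia.
  move=> h1 h2; apply/andP; split; lia.
- case=> a r [a' r']; rewrite /boxp /thD /thQ /= => /andP[ha hr] /andP[ha' hr'].
  move=> E; have e1 := congr1 fst E; have e2 := congr1 snd E; simpl in e1, e2.
  have Hn : th (a %/ 2, r %/ 2) = th (a' %/ 2, r' %/ 2).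
    by apply: injective_projections => /=; lia.
  have bn : boxp u v (a %/ 2, r %/ 2) by rewrite /boxp /=; apply/andP; split; lia.
  have bn' : boxp u v (a' %/ 2, r' %/ 2) by rewrite /boxp /=; apply/andP; split; lia.
  have := hi _ _ bn bn' Hn => -[] ? ?; f_equal; lia.
- case=> a r [a' r']; rewrite /boxp /addp /thD /thQ /= => /andP[ha hr] /andP[ha' hr'].
  have bn : boxp u v (a %/ 2, r %/ 2) by rewrite /boxp /=; apply/andP; split; lia.
  have bn' : boxp u v (a' %/ 2, r' %/ 2) by rewrite /boxp /=; apply/andP; split; lia.
  move=> E; have e1 := congr1 fst E; have e2 := congr1 snd E; simpl in e1, e2.
  case: (M2 e1) => p1 d1; case: (M2 e2) => p2 d2; clear E e1 e2.
  have am : a %% 2 = a' %% 2 by move: p1 p2; clear; lia.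
  have rm : r %% 2 = r' %% 2 by move: p1 p2; clear; lia.
  have := hs _ _ bn bn'; rewrite /addp /=.
  set na := (th (a %/ 2, r %/ 2)).1; set nr := (th (a %/ 2, r %/ 2)).2.
  set na' := (th (a' %/ 2, r' %/ 2)).1; set nr' := (th (a' %/ 2, r' %/ 2)).2.
  move: d1 d2; rewrite -/na -/nr -/na' -/nr'.
  set k1 := (a %% 2 + r %% 2) %/ 2.
  set k2 := (r %% 2 + (a %% 2 + r %% 2) %% 2) %/ 2.
  have -> : (a + (r %% 2 + 2 * na)) %/ 2 = (a %/ 2 + na) + k1 by rewrite /k1; lia.
  have -> : (a' + (r' %% 2 + 2 * na')) %/ 2 = (a' %/ 2 + na') + k1 by rewrite /k1; lia.
  have -> : (r + ((a %% 2 + r %% 2) %% 2 + 2 * nr)) %/ 2 = (r %/ 2 + nr) + k2 by rewrite /k2; lia.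
  have -> : (r' + ((a' %% 2 + r' %% 2) %% 2 + 2 * nr')) %/ 2 = (r' %/ 2 + nr') + k2 by rewrite /k2; lia.
  move=> /eqP; rewrite eqn_modDr => /eqP d1 /eqP; rewrite eqn_modDr => /eqP d2.
  move=> H; have := H (f_equal2 pair d1 d2) => -[] ? ?; f_equal; lia.
Qed.

Definition thS (th : nat*nat -> nat*nat) (x : nat*nat) :=
  let y := th (x.2, x.1) in (y.2, y.1).

Lemma ortho_swap u v th : ortho u v th -> ortho v u (thS th).
Proof.
move=> [hb hi hs]; split.
- case=> a r; rewrite /boxp /thS /= => /andP[h1 h2].
  have /andP[] := hb (r, a) (introT andP (conj h2 h1)) => ? ?; apply/andP; split => //.
- case=> a r [a' r']; rewrite /boxp /thS /= => /andP[h1 h2] /andP[h1' h2'] E.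
  have E' : th (r, a) = th (r', a').
    by apply: injective_projections; [exact: (congr1 snd E) | exact: (congr1 fst E)].
  by case: (hi (r,a) (r',a') (introT andP (conj h2 h1)) (introT andP (conj h2' h1')) E') => -> ->.
- case=> a r [a' r']; rewrite /boxp /thS /addp /= => /andP[h1 h2] /andP[h1' h2'] E.
  have E' : addp u v (r, a) (th (r, a)) = addp u v (r', a') (th (r', a')).
    rewrite /addp /=.
    by apply: injective_projections => /=; [exact: (congr1 snd E) | exact: (congr1 fst E)].
  by case: (hs (r,a) (r',a') (introT andP (conj h2 h1)) (introT andP (conj h2' h1')) E') => -> ->.
Qed.

Lemma ortho_pow i j : exists th, ortho (2 ^ i.+1) (2 ^ j.+1) th.
Proof.
elim: i j => [|i IH] j.
  exists (thB (2 ^ j)); rewrite expn1 expnS mul2n -addnn.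
  by apply: ortho_base; rewrite expn_gt0.
case: j => [|j].
  exists (thS (thB (2 ^ i.+1))); apply: ortho_swap.
  rewrite expn1 (expnS 2 i.+1) mul2n -addnn.
  by apply: ortho_base; rewrite expn_gt0.
case: (IH j) => th Hth; exists (thD th).
rewrite (expnS 2 i.+1) (expnS 2 j.+1).
by apply: ortho_double; rewrite ?expn_gt0.
Qed.

Definition subp u v (y x : nat*nat) := ((y.1 + (u - x.1)) %% u, (y.2 + (v - x.2)) %% v).

Lemma canr1 n a a' c : a < n -> a' < n -> (a + c) %% n = (a' + c) %% n -> a = a'.
Proof. by move=> ha ha' /eqP; rewrite eqn_modDr !modn_small // => /eqP. Qed.
Lemma canl1 n a a' c : a < n -> a' < n -> (c + a) %% n = (c + a') %% n -> a = a'.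
Proof. rewrite ![c + _]addnC; exact: canr1. Qed.
Lemma assoc1 n a b c : ((a + b) %% n + c) %% n = (a + (b + c) %% n) %% n.
Proof. by rewrite modnDml modnDmr addnA. Qed.
Lemma sub_add1 n x h : x < n -> h < n -> ((x + h) %% n + (n - x)) %% n = h.
Proof.
move=> hx hh; rewrite modnDml.
have -> : x + h + (n - x) = h + n by lia.
by rewrite modnDr modn_small.
Qed.
Lemma add_sub1 n x y : x < n -> y < n -> (x + (y + (n - x)) %% n) %% n = y.
Proof.
move=> hx hy; rewrite modnDmr.
have -> : x + (y + (n - x)) = y + n by lia.
by rewrite modnDr modn_small.
Qed.

Section P.
Variables u v : nat.
Hypothesis (u0 : 0 < u) (v0 : 0 < v).

Lemma boxE x : boxp u v x = (x.1 < u) && (x.2 < v). Proof. by []. Qed.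

Lemma box_add x y : boxp u v (addp u v x y).
Proof. by rewrite /boxp /addp /= !ltn_pmod. Qed.
Lemma box_sub x y : boxp u v (subp u v x y).
Proof. by rewrite /boxp /subp /= !ltn_pmod. Qed.
Lemma P_assoc x y z : addp u v (addp u v x y) z = addp u v x (addp u v y z).
Proof. by rewrite /addp /= !assoc1. Qed.
Lemma P_canl x y y' : boxp u v y -> boxp u v y' -> addp u v x y = addp u v x y' -> y = y'.
Proof.
case: y y' => a b [a' b'] /andP[/= h1 h2] /andP[/= h1' h2'] E.
have := congr1 fst E; have := congr1 snd E; rewrite /= => E2 E1.
by rewrite (canl1 h1 h1' E1) (canl1 h2 h2' E2).
Qed.
Lemma P_canr x x' y : boxp u v x -> boxp u v x' -> addp u v x y = addp u v x' y -> x = x'.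
Proof.
case: x x' => a b [a' b'] /andP[/= h1 h2] /andP[/= h1' h2'] E.
have := congr1 fst E; have := congr1 snd E; rewrite /= => E2 E1.
by rewrite (canr1 h1 h1' E1) (canr1 h2 h2' E2).
Qed.
Lemma P_sub_add x h : boxp u v x -> boxp u v h -> subp u v (addp u v x h) x = h.
Proof.
case: x h => a b [c d] /andP[/= h1 h2] /andP[/= h1' h2'].
by rewrite /subp /addp /= !sub_add1 //; case: (c, d).
Qed.
Lemma P_add_sub x y : boxp u v x -> boxp u v y -> addp u v x (subp u v y x) = y.
Proof.
case: x y => a b [c d] /andP[/= h1 h2] /andP[/= h1' h2'].
by rewrite /subp /addp /= !add_sub1.
Qed.
End P.

Section Main.
Variables (F : finType) (cs : seq F) (t L : nat) (x0 : F).
Hypotheses (hu : uniq cs) (hall : forall x, x \in cs) (hsz : size cs = t * L)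
  (t0 : 0 < t) (L0 : 0 < L).

Definition enc (x : F) := (index x cs %/ L, index x cs %% L).
Definition dec (z : nat * nat) := nth x0 cs (z.1 * L + z.2).

Lemma mix_lt a s : a < t -> s < L -> a * L + s < t * L.
Proof. move=> ha hs; nia. Qed.

Lemma divmix a s : s < L -> (a * L + s) %/ L = a.
Proof. by move=> hs; rewrite divnMDl // divn_small // addn0. Qed.
Lemma modmix a s : s < L -> (a * L + s) %% L = s.
Proof. by move=> hs; rewrite modnMDl modn_small. Qed.

Lemma idx_lt x : index x cs < t * L.
Proof. by rewrite -hsz index_mem. Qed.

Lemma enc_box x : boxp t L (enc x).
Proof. by rewrite /boxp /enc /= ltn_divLR // idx_lt ltn_pmod. Qed.

Lemma dec_enc x : dec (enc x) = x.
Proof. by rewrite /dec /enc /= -divn_eq nth_index. Qed.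

Lemma enc_dec z : boxp t L z -> enc (dec z) = z.
Proof.
case: z => a r /andP[/= ha hr]; rewrite /enc /dec /= index_uniq //; last first.
  by rewrite hsz; apply: mix_lt.
by rewrite divmix // modmix.
Qed.

Lemma enc_inj x y : enc x = enc y -> x = y.
Proof. by move=> E; rewrite -(dec_enc x) E dec_enc. Qed.

Lemma idx_nth y n : n < t * L -> index (nth y cs n) cs = n.
Proof. by move=> hn; rewrite index_uniq // hsz. Qed.

Lemma index_beta y : index (betaF cs L y) cs = (index y cs + L) %% (t * L).
Proof. by rewrite /betaF /beta_idx hsz idx_nth // ltn_pmod // muln_gt0 t0. Qed.

Lemma index_alpha y : index (alphaF cs L y) cs = alpha_idx L (index y cs).
Proof.
rewrite /alphaF idx_nth // /alpha_idx.
apply: mix_lt; last by rewrite ltn_pmod.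
by rewrite ltn_divLR // idx_lt.
Qed.

Lemma iter_beta j x : index (iter j (betaF cs L) x) cs = (index x cs + j * L) %% (t * L).
Proof.
elim: j => [|j IH] /=; first by rewrite addn0 modn_small // idx_lt.
rewrite index_beta IH modnDml.
by rewrite mulSnr addnA.
Qed.

Lemma iter_alpha i x : index (iter i (alphaF cs L) x) cs =
  (index x cs %/ L) * L + (index x cs %% L + i) %% L.
Proof.
elim: i => [|i IH] /=; first by rewrite addn0 modn_mod -divn_eq.
rewrite index_alpha /alpha_idx IH divmix ?ltn_pmod // modmix ?ltn_pmod //.
by rewrite -addn1 modnDml -addnA addn1.
Qed.

Lemma enc_Gelt i j x : enc (Gelt cs L i j x) = addp t L (enc x) (j, i).
Proof.
rewrite /enc /Gelt /addp iter_alpha iter_beta /=.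
set k := index x cs.
have hk : (k + j * L) %% (t * L) %/ L < t by rewrite ltn_divLR // ltn_pmod // muln_gt0 t0.
rewrite divmix ?ltn_pmod // modmix ?ltn_pmod //.
rewrite -modn_divl divnDMl // (modn_dvdm _ (dvdn_mull t (dvdnn L))) [k + _]addnC modnMDl.
by [].
Qed.
End Main.


Theorem theorem4p6 (F : finFieldType) (m e : nat) (cs : seq F) :
  #|F| = 2 ^ m -> 1 <= e < m -> is_enum cs ->
  forall f : F -> F -> F, klenian 2 e cs f ->
  exists g : F -> F -> F, is_LPP g /\ orthogonal_LPP f g.
Proof.
move=> hq he [hu hall] f [[hfy hfx] [b [hb [hG _]]]].
set L := 2 ^ e; set t := 2 ^ (m - e).
have t0 : 0 < t by rewrite expn_gt0.
have L0 : 0 < L by rewrite expn_gt0.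
have hqtL : #|F| = t * L by rewrite hq /t /L -expnD subnK //; lia.
have hsz : size cs = t * L.
  by rewrite -hqtL -(card_uniqP hu) cardT; apply: eq_cardT => x; rewrite hall.
have htd : #|F| %/ 2 ^ e = t by rewrite hqtL mulnK.
have [th [thb thi ths]] : exists th, ortho t L th.
  have := ortho_pow (m - e).-1 e.-1; rewrite !prednK //; lia.
pose x0 : F := 0%R.
pose D x y := subp t L (enc cs L y) (enc cs L x).
have bD : forall x y, boxp t L (D x y) by move=> x y; apply: box_sub.
have eB : forall x, boxp t L (enc cs L x) by move=> x; apply: enc_box.
have Ey : forall x y, addp t L (enc cs L x) (D x y) = enc cs L y.
  by move=> x y; apply: P_add_sub.
have hD : forall x y x' y', f x y = f x' y' -> D x y = D x' y'.
  move=> x y x' y' Ef.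
  have kc : index (f x y) cs < #|F| by rewrite hqtL -hsz index_mem.
  pose kk := Ordinal kc.
  have Ey1 : y = b kk x.
    by apply: (bij_inj (hfx x)); rewrite hb /= nth_index.
  have Ey2 : y' = b kk x'.
    by apply: (bij_inj (hfx x')); rewrite hb /= -Ef nth_index.
  case: (hG kk) => i [j [hi hj hGel]].
  have hji : boxp t L (j, i) by rewrite /boxp /= hi -htd hj.
  by rewrite /D Ey1 Ey2 !hGel !(enc_Gelt hu hall hsz t0 L0) !P_sub_add.
pose g x y := dec cs L x0 (addp t L (enc cs L y) (th (D x y))).
have encg : forall x y, enc cs L (g x y) = addp t L (enc cs L y) (th (D x y)).
  by move=> x1 y1; rewrite /g (enc_dec x0 hu hsz t0 L0) //; apply: box_add.
exists g; split; first split.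
- move=> y; apply: injF_bij => x x' /(congr1 (enc cs L)); rewrite !encg => E.
  have E1 := P_canl (thb _ (bD _ _)) (thb _ (bD _ _)) E.
  have E2 := thi _ _ (bD _ _) (bD _ _) E1.
  apply: (enc_inj x0 hall); apply: (P_canr (eB x) (eB x') (y := D x y)).
  by rewrite {2}E2 !Ey.
- move=> x; apply: injF_bij => y y' /(congr1 (enc cs L)); rewrite !encg => E.
  have E' : addp t L (enc cs L x) (addp t L (D x y) (th (D x y))) =
            addp t L (enc cs L x) (addp t L (D x y') (th (D x y'))).
    by rewrite -!P_assoc !Ey.
  have E1 := P_canl (box_add t0 L0 _ _) (box_add t0 L0 _ _) E'.
  have E2 := ths _ _ (bD _ _) (bD _ _) E1.
  by apply: (@enc_inj _ _ L x0 hall); rewrite -(Ey x y) -(Ey x y') E2.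
move=> a c.
pose Phi := fun p : F * F => (f p.1 p.2, g p.1 p.2).
have Pinj : injective Phi.
  case=> x y [x' y'] E.
  have e1 := congr1 fst E; have e2 := congr1 snd E; simpl in e1, e2.
  have hD' := hD _ _ _ _ e1.
  move/(congr1 (enc cs L)): e2; rewrite !encg hD' => E'.
  have Eyy := P_canr (eB y) (eB y') E'.
  have Exx : enc cs L x = enc cs L x'.
    by apply: (P_canr (eB x) (eB x') (y := D x y)); rewrite {2}hD' !Ey.
  by rewrite (enc_inj x0 hall Eyy) (enc_inj x0 hall Exx).
have [Pinv h1 h2] := injF_bij Pinj.
exists (Pinv (a, c)); split.
  by have := h2 (a, c); rewrite /Phi => -[-> ->].
move=> p [pa pc]; apply: Pinj; rewrite h2 /Phi pa pc.
by case: p pa pc.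
Qed.
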